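(* For integers $n\geq 3$ and $m\geq 1$, $\chi_\rho(FSSD_m(S'(K_n))) = n+2$.
   Context: All graphs are finite and simple. For a positive integer $i$, an $i$-packing in a graph is a set of vertices any two distinct members of which are at distance greater than $i$. The packing chromatic number $\chi_\rho(H)$ is the smallest $k$ such that $V(H)$ can be partitioned into sets $V_1,\dots,V_k$ with each $V_i$ an $i$-packing. For a positive integer $m$, $FSSD_m(G)$ is obtained from $G$ by replacing each edge $xy$ by a copy of $K_{2,m}$: the edge $xy$ is deleted and $m$ new vertices are added, each adjacent to exactly $x$ and $y$. The splitting graph $S'(G)$ of a graph $G$ with vertices $w_1,\dots,w_n$ is obtained from $G$ by adding new vertices $w_1',\dots,w_n'$, where each $w_i'$ is joined to every neighbor of $w_i$ in $G$ (equivalently, the neighborhood corona $G\star K_1$). $K_n$ is the complete graph on $n$ vertices. *)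

(* Defs.v *)
From mathcomp Require Import all_boot.
Unset Printing Implicit Defensive.

(* A (finite) graph: a finite vertex type with an adjacency relation.
   All graphs built below are symmetric and irreflexive (simple). *)
Record graph := Graph { gV : finType; gE : rel gV }.

Fixpoint ball (G : graph) (k : nat) (x : gV G) : {set gV G} :=
  match k with
  | 0 => [set x]
  | k'.+1 => @ball G k' x :|: [set y | [exists z in @ball G k' x, @gE G z y]]
  end.

Definition packing (G : graph) (i : nat) (A : {set gV G}) : bool :=
  [forall x in A, forall y in A, (x != y) ==> (y \notin @ball G i x)].

(* colour class j : 'I_k plays the role of V_{j+1} *)
Definition packing_coloring (G : graph) (k : nat) (c : {ffun gV G -> 'I_k}) : bool :=
  [forall j : 'I_k, packing G j.+1 [set x | c x == j]].

Definition packing_colorable (G : graph) (k : nat) : bool :=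
  [exists c : {ffun gV G -> 'I_k}, packing_coloring G k c].

Lemma packing_colorable_card (G : graph) : packing_colorable G #|gV G|.
Proof.
apply/existsP; exists [ffun x => enum_rank x].
apply/forallP => j; apply/forallP => x; apply/implyP; rewrite inE ffunE => /eqP hx.
apply/forallP => y; apply/implyP; rewrite inE ffunE => /eqP hy.
apply/implyP => hxy; exfalso; move/negP: hxy; apply.
by apply/eqP; apply: enum_rank_inj; rewrite hx hy.
Qed.

Definition packing_chi (G : graph) : nat :=
  ex_minn (ex_intro (fun k => packing_colorable G k) _ (packing_colorable_card G)).

Definition K (n : nat) : graph := @Graph 'I_n (fun x y => x != y).

(* splitting graph S'(G): vertices inl w (original) and inr w (the copy w');
   w' adjacent to every neighbour of w in G *)
Definition splitting_rel (G : graph) : rel (gV G + gV G) :=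
  fun a b => match a, b with
  | inl u, inl v => @gE G u v
  | inl u, inr v => @gE G v u
  | inr u, inl v => @gE G u v
  | inr _, inr _ => false
  end.
Definition splitting (G : graph) : graph := @Graph (gV G + gV G)%type (splitting_rel G).

(* FSSD_m(G): each edge xy (taken once, oriented by enum_rank) is deleted and
   replaced by m new vertices (x,y,j), j < m, each adjacent exactly to x and y. *)
Definition fssd_pred (G : graph) (m : nat) : pred (gV G + (gV G * gV G * 'I_m)) :=
  fun v => match v with
  | inl _ => true
  | inr (x, y, _) => @gE G x y && (enum_rank x < enum_rank y)%N
  end.
Definition fssd_V (G : graph) (m : nat) : finType :=
  {v : gV G + (gV G * gV G * 'I_m) | fssd_pred G m v}.
Definition fssd_rel (G : graph) (m : nat) : rel (fssd_V G m) :=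
  fun a b => match val a, val b with
  | inl u, inr (x, y, _) => (u == x) || (u == y)
  | inr (x, y, _), inl u => (u == x) || (u == y)
  | _, _ => false
  end.
Definition FSSD (m : nat) (G : graph) : graph := @Graph (fssd_V G m) (fssd_rel G m).

(* Main.v *)
Require Import Defs.
From mathcomp Require Import all_boot zify.
Set Implicit Arguments.
Unset Strict Implicit.
Unset Printing Implicit Defensive.

Definition SK n := splitting (K n).
Definition HG n m := FSSD m (SK n).
Definition orig n m (a : gV (SK n)) : gV (HG n m) := exist _ (inl a) isT.
Definition subv n m (a b : gV (SK n)) (t : 'I_m) : gV (HG n m) :=
  if (enum_rank a < enum_rank b)%N then insubd (orig m a) (inr (a, b, t))
  else insubd (orig m a) (inr (b, a, t)).

Lemma srel_sym n (a b : gV (SK n)) : splitting_rel (K n) a b = splitting_rel (K n) b a.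
Proof. by case: a => a; case: b => b //=; rewrite eq_sym. Qed.

Lemma srel_irr n (a : gV (SK n)) : splitting_rel (K n) a a = false.
Proof. by case: a => a /=; rewrite ?eqxx. Qed.

Lemma val_subv n m (a b : gV (SK n)) (t : 'I_m) : splitting_rel (K n) a b ->
  val (subv a b t) = inr (if (enum_rank a < enum_rank b)%N then (a, b, t) else (b, a, t)).
Proof.
move=> hab; rewrite /subv; case: ifP => hr; rewrite val_insubd /=.
  by rewrite hab hr.
have -> : splitting_rel (K n) b a by rewrite srel_sym.
have -> : (enum_rank b < enum_rank a)%N.
  rewrite ltn_neqAle leqNgt hr andbT; apply/negP => /eqP.
  move/val_inj/enum_rank_inj => e; by rewrite e srel_irr in hab.
by [].
Qed.

Notation srel n := (@splitting_rel (K n)).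

Lemma E_orig_sub n m (c a b : gV (SK n)) (t : 'I_m) : srel n a b ->
  @gE (HG n m) (orig m c) (subv a b t) = (c == a) || (c == b).
Proof.
move=> hab; rewrite /= /fssd_rel (val_subv t hab) /=.
by case: ifP => //= _; rewrite orbC.
Qed.

Lemma E_sub_orig n m (c a b : gV (SK n)) (t : 'I_m) : srel n a b ->
  @gE (HG n m) (subv a b t) (orig m c) = (c == a) || (c == b).
Proof.
move=> hab; rewrite /= /fssd_rel (val_subv t hab) /=.
by case: ifP => //= _; rewrite orbC.
Qed.

Lemma E_orig_orig n m (a b : gV (SK n)) : @gE (HG n m) (orig m a) (orig m b) = false.
Proof. by []. Qed.

Lemma orig_neq_sub n m (c a b : gV (SK n)) (t : 'I_m) : srel n a b -> orig m c != subv a b t.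
Proof.
move=> hab; apply/eqP => /(congr1 val); rewrite (val_subv t hab) /=. by [].
Qed.

Lemma subv_inj n m (a b a' b' : gV (SK n)) (t : 'I_m) : srel n a b -> srel n a' b' ->
  subv a b t = subv a' b' t -> (a = a' /\ b = b') \/ (a = b' /\ b = a').
Proof.
move=> h h' /(congr1 val); rewrite (val_subv t h) (val_subv t h').
by case: ifP => _; case: ifP => _ [-> ->]; auto.
Qed.

Lemma ball_refl (G : graph) k (x : gV G) : x \in ball G k x.
Proof. by elim: k => [|k IH] /=; rewrite ?in_set1 ?inE ?IH. Qed.

Lemma ball_S (G : graph) k (x : gV G) : ball G k x \subset ball G k.+1 x.
Proof. by apply/subsetP => y hy /=; rewrite inE hy. Qed.

Lemma ball_mono (G : graph) k k' (x : gV G) : k <= k' -> ball G k x \subset ball G k' x.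
Proof.
move=> /subnKC <-; elim: (k' - k) => [|d IH]; first by rewrite addn0.
by rewrite addnS; apply: subset_trans IH (ball_S _ _).
Qed.

Lemma ball_edge (G : graph) k (x y z : gV G) : y \in ball G k x -> gE G y z -> z \in ball G k.+1 x.
Proof.
move=> hy e /=; rewrite inE; apply/orP; right; rewrite inE; apply/existsP; exists y.
by rewrite hy.
Qed.

Lemma conflict (G : graph) k (c : {ffun gV G -> 'I_k}) (x y : gV G) d :
  packing_coloring G k c -> x != y -> c x = c y -> y \in ball G d x -> d <= (c x).+1 -> False.
Proof.
move=> /forallP /(_ (c x)) /forallP /(_ x) /implyP; rewrite inE eqxx => /(_ isT).
move=> /forallP /(_ y) /implyP; rewrite inE => h hxy hc hb hd.
have := h (introT eqP (esym hc)); rewrite hxy /= => /negP; apply.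
exact: (subsetP (ball_mono x hd)).
Qed.

Lemma ball1P (G : graph) (x z : gV G) : z \in ball G 1 x -> z = x \/ gE G x z.
Proof.
rewrite /= !inE => /orP [/eqP -> | /existsP [w /andP [hw e]]]; first by left.
by move: hw e; rewrite ?inE => /eqP -> e; right.
Qed.

Lemma ball2P (G : graph) (x y : gV G) : y \in ball G 2 x ->
  y = x \/ gE G x y \/ exists z, gE G x z /\ gE G z y.
Proof.
rewrite [ball G 2 x]/= inE => /orP [/ball1P [->|e] | ]; [by left | by right; left|].
rewrite inE => /existsP [z /andP [/ball1P [->|e1] e2]]; first by right; left.
by right; right; exists z.
Qed.

Definition col n m : {ffun gV (HG n m) -> 'I_(n+2)} :=
  [ffun v : gV (HG n m) => match val v with
             | inl (inl i) => @Ordinal (n+2) (i+2) (leq_add (ltn_ord i) (leqnn 2))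
             | inl (inr _) => @Ordinal (n+2) 1 (leq_addl n 2)
             | inr _ => @Ordinal (n+2) 0 (ltn_addl n (isT : 0 < 2))
             end].

Lemma col_ok n m : packing_coloring (HG n m) (n+2) (col n m).
Proof.
apply/forallP => j; apply/forallP => x; apply/implyP; rewrite inE => /eqP hx.
apply/forallP => y; apply/implyP; rewrite inE => /eqP hy; apply/implyP => hxy.
move: hx hy; rewrite !ffunE.
case ex: (val x) => [[a|a]|[[p q] t]]; case ey: (val y) => [[b|b]|[[p' q'] t']];
  move=> <- /(congr1 val) h; rewrite /= in h; try lia.
- exfalso; move/negP: hxy; apply; apply/eqP/val_inj; rewrite ex ey.
  by congr (inl (inl _)); apply/val_inj => /=; lia.
- apply/negP => /ball2P [hyx | [e | [z [e1 e2]]]].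
  + by rewrite hyx eqxx in hxy.
  + by move: e; rewrite /= /fssd_rel ex ey.
  + move: e1 e2; rewrite /= /fssd_rel ex ey.
    case ez: (val z) => [zz|[[p q] t]] //.
    have := valP z; rewrite ez /= => /andP [hs _].
    have hab : a != b.
      by apply/negP => /eqP e; move/negP: hxy; apply; apply/eqP/val_inj; rewrite ex ey e.
    case/orP => /eqP ea; case/orP => /eqP eb.
    * have : inr a = inr b :> gV (SK n) by rewrite ea eb.
      by case=> e; rewrite e eqxx in hab.
    * by rewrite -ea -eb in hs.
    * by rewrite -ea -eb in hs.
    * have : inr a = inr b :> gV (SK n) by rewrite ea eb.
      by case=> e; rewrite e eqxx in hab.
- apply/negP => /ball1P [hyx | e].
  + by rewrite hyx eqxx in hxy.
  + by move: e; rewrite /= /fssd_rel ex ey.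
Qed.

Lemma pigeon (T : finType) k (D : {set T}) (A : {set 'I_k}) (f : T -> 'I_k) :
  {in D &, injective f} -> {in D, forall x, f x \in A} -> #|D| <= #|A|.
Proof.
move=> inj hA; rewrite -(card_in_imset inj); apply: subset_leq_card.
by apply/subsetP => y /imsetP [x hx ->]; exact: hA.
Qed.

Lemma nz_pos k (x : 'I_k.+1) : x != ord0 -> 0 < x.
Proof. by rewrite lt0n; apply: contra => /eqP e; apply/eqP/val_inj. Qed.

Lemma orig_inj n m (a b : gV (SK n)) : orig m a = orig m b -> a = b.
Proof. by move/(congr1 val) => [->]. Qed.

Lemma three n (i : 'I_n) : 3 <= n -> exists j1 j2 : 'I_n, [/\ j1 != i, j2 != i & j1 != j2].
Proof.
move=> hn.
have h0 : 0 < n by lia. have h1 : 1 < n by lia. have h2 : 2 < n by lia.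
case: (eqVneq (val i) 0) => e0.
  exists (Ordinal h1), (Ordinal h2); split; rewrite -val_eqE /= ?e0 //.
case: (eqVneq (val i) 1) => e1.
  exists (Ordinal h0), (Ordinal h2); split; rewrite -val_eqE /= ?e1 //.
exists (Ordinal h0), (Ordinal h1); split; rewrite -val_eqE /= 1?eq_sym //.
Qed.

Lemma card_SK n : #|gV (SK n)| = n + n.
Proof. by rewrite /= card_sum !card_ord. Qed.

Lemma lower n m k (c : {ffun gV (HG n m) -> 'I_k}) :
  3 <= n -> 0 < m -> k < n + 2 -> packing_coloring (HG n m) k c -> False.
Proof.
move=> hn hm hk hc.
pose t0 : 'I_m := Ordinal hm.
have hn0 : 0 < n by lia.
case: k c hk hc => [|k] c hk hc.
  by case: (c (orig m (inl (Ordinal hn0)))).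
pose u (i : 'I_n) := orig m (inl i : gV (SK n)).
pose u' (i : 'I_n) := orig m (inr i : gV (SK n)).
have h1 : forall i, c (u i) != ord0.
  move=> i; apply/negP => /eqP hci.
  pose D := ~: [set (inl i : gV (SK n)); inr i].
  have hadj : forall v, v \in D -> srel n (inl i) v.
    move=> [j|j]; rewrite !inE negb_or => /andP [h1 h2] /=.
      by apply: contra h1 => /eqP ->.
    by apply: contra h2 => /eqP ->.
  pose f v := c (subv (inl i : gV (SK n)) v t0).
  have fnz : forall v, v \in D -> f v != ord0.
    move=> v hv; apply/negP => /eqP e.
    apply: (@conflict _ _ c (u i) (subv (inl i) v t0) 1 hc).
    - exact: orig_neq_sub (hadj v hv).
    - by rewrite hci.
    - by eapply ball_edge; [exact: ball_refl|]; rewrite /u E_orig_sub ?eqxx // hadj.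
    - by [].
  have finj : {in D &, injective f}.
    move=> v w hv hw e; case: (eqVneq v w) => // hvw; exfalso.
    apply: (@conflict _ _ c (subv (inl i) v t0) (subv (inl i) w t0) 2 hc).
    - apply/negP => /eqP /(subv_inj (hadj v hv) (hadj w hw)) [[_ evw] | [ew _]].
        by rewrite evw eqxx in hvw.
      by move: hw; rewrite -ew !inE eqxx.
    - exact: e.
    - apply: (@ball_edge _ 1 _ (orig m (inl i))); last by rewrite E_orig_sub ?eqxx // hadj.
      by eapply ball_edge; [exact: ball_refl|]; rewrite E_sub_orig ?eqxx // hadj.
    - by have := nz_pos (fnz v hv); rewrite /f; lia.
  have : #|D| <= #|[set~ (ord0 : 'I_k.+1)]|.
    by apply: (pigeon finj) => v hv; rewrite !inE fnz.
  rewrite cardsC1 card_ord /D.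
  have := cardsC [set (inl i : gV (SK n)); inr i]; rewrite cards2 card_SK /=.
  lia.
have ladj : forall i j : 'I_n, i != j -> srel n (inl i) (inl j) by [].
have hu2 : forall i j : 'I_n, i != j -> u j \in ball (HG n m) 2 (u i).
  move=> i j hij.
  apply: (@ball_edge _ 1 _ (subv (inl i : gV (SK n)) (inl j) t0)).
    by eapply ball_edge; [exact: ball_refl|]; rewrite /u E_orig_sub ?eqxx.
  by rewrite /u E_sub_orig ?eqxx ?orbT.
have uneq : forall i j : 'I_n, i != j -> u i != u j.
  by move=> i j hij; apply/negP => /eqP /orig_inj [e]; rewrite e eqxx in hij.
have uinj : injective (fun i => c (u i)).
  move=> i j /= e; case: (eqVneq i j) => // hij; exfalso.
  apply: (conflict hc (uneq i j hij) e (hu2 i j hij)).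
  by have := nz_pos (h1 i); lia.
have : #|[set: 'I_n]| <= #|[set~ (ord0 : 'I_k.+1)]|.
  by apply: (pigeon (f := fun i => c (u i))) => [i j _ _ /uinj|i _]; rewrite ?inE ?h1.
rewrite cardsC1 card_ord cardsT card_ord => hnk.
have ek : k = n by lia.
subst k.
have surj : forall x : 'I_n.+1, x != ord0 -> exists i, c (u i) = x.
  move=> x hx; case: (pickP (fun i => c (u i) == x)) => [i /eqP e | hno]; first by exists i.
  exfalso.
  have : #|[set: 'I_n]| <= #|[set~ (ord0 : 'I_n.+1)] :\ x|.
    apply: (pigeon (f := fun i => c (u i))) => [i j _ _ /uinj|i _] //.
    by rewrite !inE h1 andbT; have := hno i => /= ->.
  have := cardsD1 x [set~ (ord0 : 'I_n.+1)]; rewrite cardsC1 card_ord cardsT card_ord !inE hx.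
  lia.
have hmax : (ord_max : 'I_n.+1) != ord0.
  by apply/negP => /eqP /(congr1 val) /=; lia.
case: (surj _ hmax) => i0 hi0.
case: (three i0 hn) => j1 [j2 [hj1 hj2 hj12]].
have radj : forall i j : 'I_n, i != j -> srel n (inr i) (inl j) by [].
have ladj2 : forall i j : 'I_n, j != i -> srel n (inl j) (inr i) by move=> i j h; rewrite /= eq_sym.
have hu'0 : c (u' i0) = ord0.
  apply/eqP; apply/negPn/negP => hnz.
  case: (surj _ hnz) => l hl.
  case: (eqVneq l i0) => [el | hl0].
  - subst l.
    apply: (@conflict _ _ c (u i0) (u' i0) 4 hc).
    + by apply/negP => /eqP /orig_inj.
    + exact: hl.
    + have hj1' : i0 != j1 by rewrite eq_sym.
      apply: (@ball_edge _ 3 _ (subv (inl j1 : gV (SK n)) (inr i0) t0)).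
        apply: (@ball_edge _ 2 _ (u j1)); first exact: hu2.
        by rewrite /u E_orig_sub ?eqxx // ladj2.
      by rewrite /u' E_sub_orig ?eqxx ?orbT // ladj2.
    + by rewrite hi0 /=; lia.
  - apply: (@conflict _ _ c (u l) (u' i0) 2 hc).
    + by apply/negP => /eqP /orig_inj.
    + exact: hl.
    + apply: (@ball_edge _ 1 _ (subv (inl l : gV (SK n)) (inr i0) t0)).
        by eapply ball_edge; [exact: ball_refl|]; rewrite /u E_orig_sub ?eqxx // ladj2.
      by rewrite /u' E_sub_orig ?eqxx ?orbT // ladj2.
    + by have := nz_pos (h1 l); lia.
have hs : forall j : 'I_n, j != i0 -> nat_of_ord (c (subv (inr i0 : gV (SK n)) (inl j) t0)) = 1.
  move=> j hj.
  have sadj : srel n (inr i0) (inl j) by rewrite /= eq_sym.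
  have snz : c (subv (inr i0 : gV (SK n)) (inl j) t0) != ord0.
    apply/negP => /eqP e.
    apply: (@conflict _ _ c (u' i0) (subv (inr i0 : gV (SK n)) (inl j) t0) 1 hc).
    + exact: orig_neq_sub.
    + by rewrite hu'0 e.
    + by eapply ball_edge; [exact: ball_refl|]; rewrite /u' E_orig_sub ?eqxx.
    + by [].
  have := nz_pos snz; case: (surj _ snz) => l hl.
  suff : (c (subv (inr i0 : gV (SK n)) (inl j) t0) < 2) by lia.
  rewrite ltnNge; apply/negP => h2.
  case: (eqVneq l j) => [el|hlj].
  - subst l.
    apply: (@conflict _ _ c (subv (inr i0 : gV (SK n)) (inl j) t0) (u j) 1 hc).
    + by rewrite eq_sym /u orig_neq_sub.
    + exact: (esym hl).
    + by eapply ball_edge; [exact: ball_refl|]; rewrite /u E_sub_orig ?eqxx ?orbT.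
    + by [].
  - apply: (@conflict _ _ c (subv (inr i0 : gV (SK n)) (inl j) t0) (u l) 3 hc).
    + by rewrite eq_sym /u orig_neq_sub.
    + exact: (esym hl).
    + have sjl : srel n (inl j) (inl l) by rewrite /= eq_sym.
      apply: (@ball_edge _ 2 _ (subv (inl j : gV (SK n)) (inl l) t0)).
        apply: (@ball_edge _ 1 _ (u j)).
          by eapply ball_edge; [exact: ball_refl|]; rewrite /u E_sub_orig ?eqxx ?orbT.
        by rewrite /u E_orig_sub ?eqxx.
      by rewrite /u E_sub_orig ?eqxx ?orbT.
    + by lia.
have sadj1 : srel n (inr i0) (inl j1) by rewrite /= eq_sym.
have sadj2 : srel n (inr i0) (inl j2) by rewrite /= eq_sym.
apply: (@conflict _ _ c (subv (inr i0 : gV (SK n)) (inl j1) t0)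
                        (subv (inr i0 : gV (SK n)) (inl j2) t0) 2 hc).
- apply/negP => /eqP /(subv_inj sadj1 sadj2) [[_ [e]] | [e _]] //.
  by rewrite e eqxx in hj12.
- by apply: ord_inj; rewrite (hs _ hj1) (hs _ hj2).
- apply: (@ball_edge _ 1 _ (u' i0)).
    by eapply ball_edge; [exact: ball_refl|]; rewrite /u' E_sub_orig ?eqxx.
  by rewrite /u' E_orig_sub ?eqxx.
- by rewrite hs.
Qed.

Unset Implicit Arguments.

Theorem proposition9 (n m : nat) :
  3 <= n -> 1 <= m -> packing_chi (FSSD m (splitting (K n))) = n + 2.
Proof.
move=> hn hm; rewrite /packing_chi; case: ex_minnP => k hk hmin.
apply/eqP; rewrite eqn_leq; apply/andP; split.
  by apply: hmin; apply/existsP; exists (col n m); exact: col_ok.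
rewrite leqNgt; apply/negP => hlt; case/existsP: hk => c hc.
exact: (lower hn hm hlt hc).
Qed.
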